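(* Let $n,n'\in\mathbb{N}$, $\mathbb{K}$ a field, $R=\mathbb{K}[X_1,\ldots,X_n]$, $R'=\mathbb{K}[X_1,\ldots,X_{n'}]$, and $J\subsetneq I\subset R$ monomial ideals. Let $\phi:\mathbb{N}^n\to\mathbb{N}^{n'}$ be a map, $\Phi:R\to R'$ the $\mathbb{K}$-linear map with $\Phi(X^a)=X^{\phi(a)}$ on monomials, and let $I'$, $J'\subset R'$ be the ideals generated by $\Phi(I)$ resp. $\Phi(J)$. Let $\Omega$ be a finite set, let $I/J=\bigoplus_{i\in\Omega}X^{a_i}\mathbb{K}[Z_i]$ be a Stanley decomposition of $I/J$, and let $Z_i'$, $i\in\Omega$, be subsets of $\{X_1,\ldots,X_{n'}\}$. Assume that $\phi$ is injective, monotonic and preserves joins, and that \[\Phi(X^{a_i})\mathbb{K}[Z_i']\cap\Phi(R)=\Phi(X^{a_i}\mathbb{K}[Z_i])\quad\text{for each } i\in\Omega.\] Let $V=\sum_{i\in\Omega}\Phi(X^{a_i})\mathbb{K}[Z_i']$ as a graded vector space. Then this sum is direct, $V=\bigoplus_{i\in\Omega}\Phi(X^{a_i})\mathbb{K}[Z_i']$, and $V\subset I'/J'$ (i.e. $V$ is spanned by monomials lying in $I'\setminus J'$).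
   Context: $\mathbb{N}^n$ carries the componentwise partial order, with join $\vee$ the componentwise maximum; monotonic means order-preserving; preserving joins means $\phi(a\vee b)=\phi(a)\vee\phi(b)$. A Stanley decomposition of $I/J$ (fine multigrading) is a finite family of pairs $(\mathbb{K}[Z_i], X^{a_i})$, with $Z_i$ a subset of the variables and $X^{a_i}\mathbb{K}[Z_i]$ free over $\mathbb{K}[Z_i]$, such that $I/J=\bigoplus_i X^{a_i}\mathbb{K}[Z_i]$ as multigraded $\mathbb{K}$-vector spaces. *)

(* Defs.v *)
From HB Require Import structures.
From mathcomp Require Import all_boot all_algebra.
From mathcomp Require Import mpoly.
Set Implicit Arguments. Unset Strict Implicit. Unset Printing Implicit Defensive.
Import GRing.Theory.
Local Open Scope ring_scope.

Section Defs.
Variable K : fieldType.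

Definition gen_ideal (n : nat) (S : {mpoly K[n]} -> Prop) : {mpoly K[n]} -> Prop :=
  fun p => exists s : seq ({mpoly K[n]} * {mpoly K[n]}),
    (forall x, x \in s -> S x.2) /\ p = \sum_(x <- s) x.1 * x.2.

Definition monomial_ideal (n : nat) (I : {mpoly K[n]} -> Prop) : Prop :=
  exists M : 'X_{1..n} -> Prop,
    forall p, I p <-> gen_ideal (fun q => exists m, M m /\ q = 'X_[m]) p.

(* the Stanley space X^a K[Z], Z a set of variables: the K-span of the
   monomials X^(a+b) with b supported in Z *)
Definition stanley_space (n : nat) (a : 'X_{1..n}) (Z : {set 'I_n})
  : {mpoly K[n]} -> Prop :=
  fun p => forall m, m \in msupp p ->
    exists b : 'X_{1..n}, (forall j, j \notin Z -> b j = 0%N) /\ m = (a + b)%MM.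

(* (a_i, Z_i)_{i in Omega} is a Stanley decomposition of I/J:
   each X^(a_i) K[Z_i] lies in I, and the map  (+)_i X^(a_i)K[Z_i] -> I/J
   (sum followed by the projection) is bijective. *)
Definition stanley_decomposition (n : nat) (I J : {mpoly K[n]} -> Prop)
  (Omega : finType) (a : Omega -> 'X_{1..n}) (Z : Omega -> {set 'I_n}) : Prop :=
  [/\ forall i p, stanley_space (a i) (Z i) p -> I p,
      (forall p, I p -> exists v : Omega -> {mpoly K[n]},
          (forall i, stanley_space (a i) (Z i) (v i)) /\
          J (p - \sum_i v i)) &
      (forall v : Omega -> {mpoly K[n]},
          (forall i, stanley_space (a i) (Z i) (v i)) ->
          J (\sum_i v i) -> forall i, v i = 0)].

Definition Phi_map (n n' : nat) (phi : 'X_{1..n} -> 'X_{1..n'})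
  (p : {mpoly K[n]}) : {mpoly K[n']} :=
  \sum_(m <- msupp p) p@_m *: 'X_[phi m].

Definition Phi_image (n n' : nat) (phi : 'X_{1..n} -> 'X_{1..n'})
  (S : {mpoly K[n]} -> Prop) : {mpoly K[n']} -> Prop :=
  fun q => exists p, S p /\ q = Phi_map phi p.

End Defs.

Definition monotonic_mnm (n n' : nat) (phi : 'X_{1..n} -> 'X_{1..n'}) : Prop :=
  forall a b, lem a b -> lem (phi a) (phi b).
Definition preserves_joins (n n' : nat) (phi : 'X_{1..n} -> 'X_{1..n'}) : Prop :=
  forall a b, phi (mlcm a b) = mlcm (phi a) (phi b).

(* Main.v *)
Require Import Defs.
From HB Require Import structures.
From mathcomp Require Import all_boot all_algebra.
From mathcomp Require Import mpoly.
Import GRing.Theory.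
Local Open Scope ring_scope.
Set Implicit Arguments. Unset Strict Implicit.

Definition supp_P (K : fieldType) (n : nat) (P : 'X_{1..n} -> Prop)
  (p : {mpoly K[n]}) := forall m, m \in msupp p -> P m.

Lemma msupp_zero (K : fieldType) (n : nat) : msupp (0 : {mpoly K[n]}) = [::].
Proof. by apply/eqP; rewrite msupp_eq0. Qed.

Lemma supp0 (K : fieldType) (n : nat) P : supp_P P (0 : {mpoly K[n]}).
Proof. by move=> m; rewrite msupp_zero. Qed.

Lemma suppD (K : fieldType) (n : nat) P (p q : {mpoly K[n]}) :
  supp_P P p -> supp_P P q -> supp_P P (p + q).
Proof.
by move=> hp hq m /msuppD_le; rewrite mem_cat => /orP [/hp|/hq].
Qed.

Lemma suppM (K : fieldType) (n : nat) (P : 'X_{1..n} -> Prop) (p q : {mpoly K[n]}) :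
  (forall m d, P m -> P (m + d)%MM) -> supp_P P q -> supp_P P (p * q).
Proof.
move=> up hq m /msuppM_le /allpairsP [[m1 m2] [/= h1 h2 ->]].
rewrite addmC; apply: up; exact: hq.
Qed.

Lemma gen_supp (K : fieldType) (n : nat) (P : 'X_{1..n} -> Prop)
  (S : {mpoly K[n]} -> Prop) p :
  (forall m d, P m -> P (m + d)%MM) -> (forall x, S x -> supp_P P x) ->
  gen_ideal S p -> supp_P P p.
Proof.
move=> up hS [s [hs ->]]; elim: s hs => [|x s IH] hs.
  by rewrite big_nil; apply: supp0.
rewrite big_cons; apply: suppD.
  by apply: suppM => //; apply: hS; apply: hs; rewrite mem_head.
by apply: IH => y hy; apply: hs; rewrite in_cons hy orbT.
Qed.

Lemma mono_X (K : fieldType) (n : nat) (I : {mpoly K[n]} -> Prop) M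
  (hM : forall p, I p <-> gen_ideal (fun q => exists m, M m /\ q = 'X_[m]) p)
  g w : M g -> lem g w -> I 'X_[w].
Proof.
move=> hg hgw; apply/hM; exists [:: ('X_[(w - g)%MM], 'X_[g])]; split.
  by move=> x; rewrite mem_seq1 => /eqP -> /=; exists g.
by rewrite big_seq1 /= -mpolyXD submK.
Qed.

Lemma mono_supp (K : fieldType) (n : nat) (I : {mpoly K[n]} -> Prop) M
  (hM : forall p, I p <-> gen_ideal (fun q => exists m, M m /\ q = 'X_[m]) p)
  p : I p -> supp_P (fun m => exists g, M g /\ lem g m) p.
Proof.
move=> /hM; apply: gen_supp.
  move=> m d [g [hg hgm]]; exists g; split => //.
  exact: lepm_trans hgm (lem_addr _ _).
move=> x [g [hg ->]] m /mem_msuppXP <-; exists g; split => //.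
exact: lepm_refl.
Qed.

Lemma Phi_X (K : fieldType) (n n' : nat) (phi : 'X_{1..n} -> 'X_{1..n'}) c :
  Phi_map phi ('X_[c] : {mpoly K[n]}) = 'X_[phi c].
Proof. by rewrite /Phi_map msuppX big_seq1 mcoeffX eqxx scale1r. Qed.

Lemma Phi_supp (K : fieldType) (n n' : nat) (phi : 'X_{1..n} -> 'X_{1..n'})
  (p : {mpoly K[n]}) m :
  m \in msupp (Phi_map phi p) -> exists2 m', m' \in msupp p & m = phi m'.
Proof.
move=> hm.
case: (boolP (has (fun m' => phi m' == m) (msupp p))) =>
  [/hasP [m' h /eqP <-]|/hasPn H]; first by exists m'.
exfalso; move: hm; rewrite mcoeff_msupp /Phi_map raddf_sum big1_seq ?eqxx //.
by move=> m' /= hm'; rewrite mcoeffZ mcoeffX (negbTE (H m' hm')) mulr0.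
Qed.

Lemma Phi_inj_supp (K : fieldType) (n n' : nat) (phi : 'X_{1..n} -> 'X_{1..n'})
  (hinj : injective phi) (p : {mpoly K[n]}) c :
  'X_[phi c] = Phi_map phi p -> c \in msupp p.
Proof.
move=> E; case: (boolP (c \in msupp p)) => // hc; exfalso.
have : ('X_[phi c] : {mpoly K[n']})@_(phi c) = 0.
  rewrite E /Phi_map raddf_sum big1_seq // => m' /= hm'.
  rewrite mcoeffZ mcoeffX.
  case: eqP => [/hinj E'|_]; last by rewrite mulr0.
  by move: hc; rewrite -E' hm'.
by rewrite mcoeffX eqxx => /eqP; rewrite oner_eq0.
Qed.

Lemma stanley0 (K : fieldType) (n : nat) a Z : stanley_space a Z (0 : {mpoly K[n]}).
Proof. by move=> m; rewrite msupp_zero. Qed.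

Lemma Xn0 (K : fieldType) (n : nat) (c : 'X_{1..n}) : ('X_[c] : {mpoly K[n]}) != 0.
Proof. by rewrite -msupp_eq0 msuppX. Qed.

Lemma between (K : fieldType) (n : nat) (a0 : 'X_{1..n}) (Z : {set 'I_n}) (b m u : 'X_{1..n}) :
  (forall j, j \notin Z -> b j = 0%N) -> m = (a0 + b)%MM ->
  lem a0 u -> lem u m -> stanley_space a0 Z ('X_[u] : {mpoly K[n]}).
Proof.
move=> hb hm h1 h2 m' /mem_msuppXP <-; exists (u - a0)%MM; split.
  move=> j hj; rewrite mnmBE; apply/eqP; rewrite subn_eq0.
  by have := mnm_lepP h2 j; rewrite hm mnmDE hb // addn0.
by rewrite addmC submK.
Qed.

Theorem lemma4p2 (K : fieldType) (n n' : nat)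
  (I J : {mpoly K[n]} -> Prop)
  (hI : monomial_ideal I) (hJ : monomial_ideal J)
  (hJI : (forall p, J p -> I p) /\ (exists p, I p /\ ~ J p))
  (phi : 'X_{1..n} -> 'X_{1..n'})
  (Omega : finType) (a : Omega -> 'X_{1..n}) (Z : Omega -> {set 'I_n})
  (hSD : stanley_decomposition I J a Z)
  (Z' : Omega -> {set 'I_n'})
  (hinj : injective phi) (hmono : monotonic_mnm phi) (hjoin : preserves_joins phi)
  (hcap : forall i (q : {mpoly K[n']}),
      (stanley_space (phi (a i)) (Z' i) q /\ Phi_image phi (fun _ : {mpoly K[n]} => True) q)
      <-> Phi_image phi (stanley_space (a i) (Z i)) q) :
  let I' := gen_ideal (Phi_image phi I) in
  let J' := gen_ideal (Phi_image phi J) in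
  (* the sum V = sum_i Phi(X^(a_i)) K[Z'_i] is direct *)
  (forall v : Omega -> {mpoly K[n']},
      (forall i, stanley_space (phi (a i)) (Z' i) (v i)) ->
      \sum_i v i = 0 -> forall i, v i = 0)
  /\
  (* V is spanned by monomials lying in I' \ J' *)
  (forall i (v : {mpoly K[n']}), stanley_space (phi (a i)) (Z' i) v ->
      forall m, m \in msupp v -> I' 'X_[m] /\ ~ J' 'X_[m]).
Proof.
move=> I' J'.
case: hSD => hS1 hS2 hS3.
have key : forall i c, stanley_space (phi (a i)) (Z' i) ('X_[phi c] : {mpoly K[n']}) ->
    stanley_space (a i) (Z i) ('X_[c] : {mpoly K[n]}).
  move=> i c hst.
  have hP : Phi_image phi (fun _ : {mpoly K[n]} => True) ('X_[phi c] : {mpoly K[n']}).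
    by exists 'X_[c]; split => //; rewrite Phi_X.
  have [p [hp E]] := (hcap i 'X_[phi c]).1 (conj hst hP).
  move=> m /mem_msuppXP <-.
  by apply: hp; apply: (Phi_inj_supp hinj E).
have J0 : J 0 by case: hJ => M0 hM0; apply/hM0; exists [::]; split => //; rewrite big_nil.
have contra1 : forall i c, stanley_space (a i) (Z i) ('X_[c] : {mpoly K[n]}) ->
    J 'X_[c] -> False.
  move=> i c hst hJc.
  pose v := fun k => if k == i then ('X_[c] : {mpoly K[n]}) else 0.
  have hv : forall k, stanley_space (a k) (Z k) (v k).
    by move=> k; rewrite /v; case: eqP => [->|_] //; apply: stanley0.
  have hsum : \sum_k v k = 'X_[c].
    rewrite (bigD1 i) //= /v eqxx big1 ?addr0 // => k /negbTE ->.
    by [].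
  have := hS3 v hv; rewrite hsum => /(_ hJc i).
  by rewrite /v eqxx => /eqP; rewrite (negbTE (Xn0 _ _)).
have contra2 : forall i j c, j != i -> stanley_space (a i) (Z i) ('X_[c] : {mpoly K[n]}) ->
    stanley_space (a j) (Z j) ('X_[c] : {mpoly K[n]}) -> False.
  move=> i j c hji hsi hsj.
  pose v := fun k => if k == i then ('X_[c] : {mpoly K[n]})
                     else if k == j then - 'X_[c] else 0.
  have hv : forall k, stanley_space (a k) (Z k) (v k).
    move=> k; rewrite /v; case: eqP => [->|_] //; case: eqP => [->|_].
      by move=> m; rewrite (perm_mem (msuppN _)); apply: hsj.
    exact: stanley0.
  have hsum : \sum_k v k = 0.
    rewrite (bigD1 i) //= (bigD1 j) //= /v eqxx (negbTE hji) eqxx big1.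
      by rewrite addr0 subrr.
    by move=> k /andP [/negbTE -> /negbTE ->].
  have := hS3 v hv; rewrite hsum => /(_ J0 i).
  by rewrite /v eqxx => /eqP; rewrite (negbTE (Xn0 _ _)).
split.
  move=> v hv hsum i; apply/eqP; rewrite -msupp_eq0.
  case E: (msupp (v i)) => [|m s] //.
  have hm : m \in msupp (v i) by rewrite E mem_head.
  exfalso.
  have : (\sum_k v k)@_m = (v i)@_m.
    rewrite raddf_sum (bigD1 i) //= big1 ?addr0 // => k hk.
    apply/eqP; rewrite mcoeff_eq0; apply/negP => hmk.
    have [b [hb hmb]] := hv i m hm.
    have [b' [hb' hmb']] := hv k m hmk.
    have le1 : lem (mlcm (phi (a i)) (phi (a k))) m.
      by rewrite lem_mlcm {1}hmb lem_addr /= hmb' lem_addr.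
    apply: (contra2 i k (mlcm (a i) (a k)) hk).
      apply: key; apply: (between hb hmb); rewrite hjoin //.
      exact: lem_mlcml.
    apply: key; apply: (between hb' hmb'); rewrite hjoin //.
    exact: lem_mlcmr.
  rewrite hsum mcoeff0 => /esym/eqP; rewrite mcoeff_eq0 hm.
  by [].
move=> i v hv m hm.
have [b [hb hmb]] := hv m hm.
split.
  exists [:: ('X_[b], 'X_[phi (a i)])]; split.
    move=> x; rewrite mem_seq1 => /eqP -> /=.
    exists 'X_[a i]; split; last by rewrite Phi_X.
    apply: (hS1 i) => m' /mem_msuppXP <-; exists 0%MM; split.
      by move=> j _; rewrite mnm0E.
    by rewrite addm0.
  by rewrite big_seq1 /= -mpolyXD hmb addmC.
move=> hJ'.
case: hJ => M hM.
pose P := fun m0 : 'X_{1..n'} => exists m', (exists g, M g /\ lem g m') /\ lem (phi m') m0.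
have up : forall m0 d, P m0 -> P (m0 + d)%MM.
  move=> m0 d [m' [hg hle]]; exists m'; split => //.
  exact: lepm_trans hle (lem_addr _ _).
have hS : forall x, Phi_image phi J x -> supp_P P x.
  move=> x [p [hp ->]] m0 /Phi_supp [m' hm' ->].
  exists m'; split; last exact: lepm_refl.
  exact: (mono_supp hM hp).
have hmX : m \in msupp ('X_[m] : {mpoly K[n']}) by rewrite msuppX mem_head.
have [m' [[g [hg hgm']] hle]] := gen_supp up hS hJ' hmX.
have le1 : lem (mlcm (phi (a i)) (phi m')) m.
  by rewrite lem_mlcm hle {1}hmb lem_addr.
apply: (contra1 i (mlcm (a i) m')).
  apply: key; apply: (between hb hmb); rewrite hjoin //.
  exact: lem_mlcml.
apply: (mono_X hM hg).
exact: lepm_trans hgm' (lem_mlcmr _ _).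
Qed.
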